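(* Let $T$ be a tree on $n$ vertices, with vertex set $\{1,\dots,n\}$ and distance matrix $D$, and let $1$ be a fixed vertex. Let $R(T)=2(n-1)\mathbf{1}^\top D e_1-\mathbf{1}^\top D\mathbf{1}$. Then $$R(T)=4\sum_{1\le a<b\le n} d_{1,P_{a,b}}$$ and $$0\le R(T)\le \tfrac{2}{3}n(n-1)(n-2).$$ The upper bound is achieved if and only if $T$ is the path $P_n$ and vertex $1$ is one of its end vertices; the lower bound is achieved if and only if $T$ is a star and vertex $1$ is its centre.
   Context: $\mathbf{1}$ is the all-ones vector and $e_1$ the first standard basis vector (corresponding to vertex $1$), so $\mathbf{1}^\top De_1=\sum_u d_{u,1}$. $P_{a,b}$ is the unique path in $T$ between $a$ and $b$, and $d_{1,P_{a,b}}$ is the distance from vertex $1$ to the vertex of $P_{a,b}$ closest to it. *)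

(* Defs.v *)
From mathcomp Require Import all_boot all_order all_algebra.
Set Implicit Arguments. Unset Strict Implicit. Unset Printing Implicit Defensive.
Import Order.TTheory GRing.Theory Num.Theory.

(* A simple graph on a finite vertex type T is a symmetric irreflexive
   relation e : rel T. *)
Section Graphs.
Variable T : finType.
Variable e : rel T.

Definition walk_len (k : nat) (x y : T) : bool :=
  [exists p : k.-tuple T, path e x p && (last x p == y)].

(* graph distance: the least length of a walk from x to y
   (walks shorter than #|T| suffice in a connected graph) *)
Definition dist (x y : T) : nat :=
  \big[minn/#|T|]_(k < #|T| | walk_len k x y) k.

Definition acyclic : Prop :=
  ~ exists c : seq T, [/\ 2 < size c, uniq c & cycle e c].

Definition connected : Prop := forall x y : T, connect e x y.

Definition is_tree : Prop := connected /\ acyclic.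

(* v lies on a (simple) path from a to b; in a tree this path is unique,
   so this is the vertex set of P_{a,b} *)
Definition on_path (a b v : T) : bool :=
  [exists k : 'I_#|T|, exists p : k.-tuple T,
     [&& path e a p, last a p == b, uniq (a :: p) & v \in a :: p]].

Definition dist_to_path (r a b : T) : nat :=
  \big[minn/#|T|]_(v | on_path a b v) dist r v.

Definition is_path_with_end (r : T) : Prop :=
  exists s : seq T, [/\ perm_eq s (enum T), head r s = r &
    forall x y : T, e x y <->
      exists i, i.+1 < size s /\
        ((nth r s i = x /\ nth r s i.+1 = y) \/ (nth r s i = y /\ nth r s i.+1 = x))].

Definition is_star_centre (r : T) : Prop :=
  forall x y : T, e x y = ((x == r) != (y == r)).
End Graphs.

Definition Rval (n : nat) (e : rel 'I_n) (r : 'I_n) : int :=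
  ((2 * (n - 1))%N%:Z * (\sum_(u : 'I_n) dist e u r)%N%:Z
   - (\sum_(u : 'I_n) \sum_(v : 'I_n) dist e u v)%N%:Z)%R.

(* Main.v *)
Require Import Defs.
From mathcomp Require Import all_boot all_order all_algebra zify.
Set Implicit Arguments. Unset Strict Implicit. Unset Printing Implicit Defensive.

Lemma bigminn_le (I : finType) (P : pred I) (F : I -> nat) m j :
  P j -> \big[minn/m]_(i | P i) F i <= F j.
Proof.
move=> Pj; have : j \in index_enum I by rewrite mem_index_enum.
elim: (index_enum I) => [//|a l IH]; rewrite inE big_cons.
case/orP=> [/eqP <-|jl]; first by rewrite Pj geq_minl.
by case: (P a); rewrite ?geq_min IH ?orbT.
Qed.

Lemma bigminn_le_id (I : finType) (P : pred I) (F : I -> nat) m :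
  \big[minn/m]_(i | P i) F i <= m.
Proof.
elim: (index_enum I) => [|a l IH]; rewrite ?big_nil ?big_cons //.
by case: (P a); rewrite ?geq_min IH ?orbT.
Qed.

Lemma bigminn_ge (I : finType) (P : pred I) (F : I -> nat) m k :
  k <= m -> (forall i, P i -> k <= F i) -> k <= \big[minn/m]_(i | P i) F i.
Proof. by move=> km kF; elim/big_ind: _ => // x y Hx Hy; rewrite leq_min Hx. Qed.

Section Tree.
Variables (T : finType) (e : rel T).
Hypotheses (esym : symmetric e) (eirr : irreflexive e) (etree : is_tree e).
Local Notation N := #|T|.
Local Notation dist := (dist e).

Lemma walk_lenP k x y :
  reflect (exists p, [/\ size p = k, path e x p & last x p = y]) (walk_len e k x y).
Proof.
apply: (iffP existsP) => [[p /andP[pp /eqP pl]] | [p [sp pp pl]]].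
  by exists (val p); rewrite size_tuple.
have sp' : size p == k by rewrite sp.
by exists (Tuple sp'); rewrite /= pp pl eqxx.
Qed.

Lemma dist_le k x y : walk_len e k x y -> dist x y <= k.
Proof.
move=> w; rewrite /Defs.dist; case: (ltnP k N) => kN.
  exact: (@bigminn_le _ _ _ _ (Ordinal kN)).
exact: leq_trans (bigminn_le_id _ _ _) kN.
Qed.

Lemma upath x y : exists p, [/\ path e x p, last x p = y & uniq (x :: p)].
Proof.
have /connectP [p pp ->] := etree.1 x y.
case: (shortenP pp) => p' pp' up' _; by exists p'.
Qed.

Lemma upath_size (x : T) p : uniq (x :: p) -> size p < N.
Proof. by move=> u; have := card_uniqP u; rewrite /= => E; rewrite -ltnS -E; exact: max_card. Qed.

Lemma dist_walk x y : dist x y < N /\ walk_len e (dist x y) x y.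
Proof.
have [p [pp pl up]] := upath x y.
have w : walk_len e (size p) x y by apply/walk_lenP; exists p.
have dl := dist_le w; have sN := upath_size up.
suff : dist x y = N \/ walk_len e (dist x y) x y /\ dist x y < N.
  by case=> [E|[]//]; move: dl; rewrite E => /(leq_ltn_trans)/(_ sN); rewrite ltnn.
rewrite /Defs.dist; elim/big_ind: _; [by left| |].
  move=> a b Ha Hb; rewrite /minn; case: ifP => _ //.
by move=> i wi; right; split.
Qed.

Lemma dist_lt x y : dist x y < N. Proof. by case: (dist_walk x y). Qed.

Lemma dist0 x : dist x x = 0.
Proof. by apply/eqP; rewrite -leqn0; apply: dist_le; apply/walk_lenP; exists [::]. Qed.

Lemma dist0_eq x y : dist x y = 0 -> x = y.
Proof.
move=> d; have [_ /walk_lenP [p [sp _ <-]]] := dist_walk x y.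
by move: sp; rewrite d; case: p.
Qed.

Lemma walk_rev k x y : walk_len e k x y -> walk_len e k y x.
Proof.
move=> /walk_lenP [p [sp pp pl]]; apply/walk_lenP.
exists (rev (belast x p)); split.
- by rewrite size_rev size_belast.
- rewrite -pl rev_path; apply: sub_path pp => a b; by rewrite esym.
- by case: p {sp pp} pl => [|a p] /= pl; [rewrite pl | rewrite rev_cons last_rcons].
Qed.

Lemma dist_sym x y : dist x y = dist y x.
Proof.
apply/eqP; rewrite eqn_leq; apply/andP; split; apply: dist_le; apply: walk_rev;
  exact: (dist_walk _ _).2.
Qed.

Lemma dist_edge x y z : e x y -> dist x z <= (dist y z).+1.
Proof.
move=> exy; apply: dist_le; have /walk_lenP [p [sp pp pl]] := (dist_walk y z).2.
by apply/walk_lenP; exists (y :: p); rewrite /= exy sp pp.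
Qed.


Variable r : T.
Definition h v := dist v r.
Definition par v := if [pick u | e v u && ((h u).+1 == h v)] is Some u then u else v.

Lemma h_eq0 v : h v = 0 -> v = r.
Proof. exact: dist0_eq. Qed.

Lemma hr : h r = 0.
Proof. exact: dist0. Qed.

Lemma par_spec v : v != r -> e v (par v) /\ (h (par v)).+1 = h v.
Proof.
move=> vr; rewrite /par; case: pickP => [u /andP[evu /eqP] //|none].
exfalso; have [_ /walk_lenP [[|u p] [sp pp pl]]] := dist_walk v r.
  by move: pl => /= E; rewrite E eqxx in vr.
move: pp => /= /andP[evu pp].
have hu : h u <= (h v).-1.
  apply: dist_le; apply/walk_lenP; exists p; split => //.
  by rewrite /h -sp.
have := dist_edge r evu; rewrite -/(h v) -/(h u) => hv.
have := none u; rewrite evu /=.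
have hv0 : 0 < h v by rewrite /h -sp.
move/eqP; apply; lia.
Qed.

Lemma par_r : par r = r.
Proof. by rewrite /par; case: pickP => [u /andP[_ /eqP]|//]; rewrite hr. Qed.

Lemma h_par v : h (par v) = (h v).-1.
Proof.
case: (eqVneq v r) => [->|vr]; first by rewrite par_r hr.
by have [_ <-] := par_spec vr.
Qed.

Lemma h_iter k v : h (iter k par v) = h v - k.
Proof. by elim: k => [|k IH]; rewrite ?subn0 //= h_par IH subnS. Qed.

Lemma iter_r k v : h v <= k -> iter k par v = r.
Proof. by move=> hk; apply: h_eq0; rewrite h_iter; apply/eqP; rewrite subn_eq0. Qed.

Definition anc_def v := [set u | [exists i : 'I_N, iter i par v == u]].
Definition anc := locked anc_def.

Lemma ancP u v : reflect (exists k, iter k par v = u) (u \in anc v).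
Proof.
rewrite /anc -lock inE; apply: (iffP existsP) => [[i /eqP <-]|[k <-]]; first by exists i.
case: (ltnP k N) => kN; first by exists (Ordinal kN).
have hN : h v < N := dist_lt v r.
exists (Ordinal hN); rewrite /= !iter_r //; first by rewrite (leq_trans (ltnW hN)).
Qed.

Lemma anc_self v : v \in anc v.
Proof. by apply/ancP; exists 0. Qed.

Lemma r_anc v : r \in anc v.
Proof. by apply/ancP; exists (h v); rewrite iter_r. Qed.

Lemma h_anc u v : u \in anc v -> h u <= h v.
Proof. by case/ancP => k <-; rewrite h_iter leq_subr. Qed.

Lemma h_anc_eq u v : u \in anc v -> h u = h v -> u = v.
Proof.
case/ancP => k <-; rewrite h_iter => E.
case: k E => [//|k] E.
have hv0 : h v = 0 by lia.
by rewrite (h_eq0 hv0) iter_r // hr.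
Qed.

Lemma anc_trans u v w : u \in anc v -> v \in anc w -> u \in anc w.
Proof.
case/ancP => k <- /ancP [l <-]; apply/ancP; exists (k + l); by rewrite iterD.
Qed.

Lemma anc_antisym u v : u \in anc v -> v \in anc u -> u = v.
Proof.
move=> uv vu; apply: (h_anc_eq uv); apply/eqP; rewrite eqn_leq.
by rewrite (h_anc uv) (h_anc vu).
Qed.

Lemma anc_par v : v != r -> anc v = v |: anc (par v).
Proof.
move=> vr; apply/setP => u; rewrite in_setU1; apply/ancP/idP.
  case=> [[|k] <-]; first by rewrite eqxx.
  by rewrite iterSr; apply/orP; right; apply/ancP; exists k.
case/orP => [/eqP ->|/ancP [k <-]]; first by exists 0.
by exists k.+1; rewrite iterSr.
Qed.

Lemma par_notin v : v != r -> v \notin anc (par v).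
Proof.
move=> vr; apply/negP => /h_anc; rewrite h_par.
have [_ <-] := par_spec vr; by rewrite /= ltnn.
Qed.

Lemma anc_r : anc r = [set r].
Proof.
apply/setP => u; rewrite in_set1; apply/idP/eqP => [/h_anc|->]; last exact: anc_self.
by rewrite hr leqn0 => /eqP /h_eq0.
Qed.


Lemma edge_par x y : e x y -> x = par y \/ y = par x.
Proof.
move=> exy; case: (eqVneq x (par y)) => [->|xp]; first by left.
case: (eqVneq y (par x)) => [->|yp]; first by right.
exfalso.
pose e' := [rel u v | e u v && ~~(((u == x) && (v == y)) || ((u == y) && (v == x)))].
have e'sym : symmetric e'.
  by move=> u v /=; rewrite esym [X in ~~ X]orbC [(v == y) && _]andbC [(v == x) && _]andbC.
have up : forall k w, h w <= k -> connect e' w r.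
  elim=> [|k IH] w hw.
    by move: hw; rewrite leqn0 => /eqP /h_eq0 ->; apply: connect0.
  case: (eqVneq w r) => [->|wr]; first exact: connect0.
  have [ew hp] := par_spec wr.
  apply: (connect_trans (y := par w)); last by apply: IH; lia.
  apply: connect1 => /=; rewrite ew /=.
  apply/negP => /orP [/andP[/eqP wx /eqP pw]|/andP[/eqP wy /eqP pw]].
    by move: yp; rewrite -pw wx eqxx.
  by move: xp; rewrite -pw wy eqxx.
have cxy : connect e' x y.
  apply: (connect_trans (up _ x (leqnn _))).
  by rewrite (sym_connect_sym e'sym); apply: up (leqnn _).
case/connectP: cxy => p pp pl.
move: pl; case: (shortenP pp) => p' pp' up' _ pl'.
apply: etree.2; exists (x :: p'); split => //.
  case: p' pp' up' pl' => [|u [|v p']] //=.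
    by move=> _ _ E; rewrite E eirr in exy.
  by move=> /andP[/andP[_]]; move=> H _ _ E; rewrite E !eqxx /= in H.
rewrite /cycle rcons_path; apply/andP; split.
  by apply: sub_path pp' => a b /andP[].
by rewrite -pl' esym.
Qed.


Definition sd (A B : {set T}) := (A :\: B) :|: (B :\: A).

Lemma sdC (A B : {set T}) : sd A B = sd B A.
Proof. by rewrite /sd setUC. Qed.

Lemma sd_step (A A' B : {set T}) (a : T) : A \subset a |: A' -> A' \subset a |: A ->
  #|sd A B| <= (#|sd A' B|).+1.
Proof.
move=> /subsetP H1 /subsetP H2.
have S : sd A B \subset a |: sd A' B.
  apply/subsetP => x; move: (H1 x) (H2 x); rewrite !inE.
  by case: (x == a); case: (x \in A); case: (x \in A'); case: (x \in B).
apply: (leq_trans (subset_leq_card S)); rewrite cardsU1.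
by case: (a \in _).
Qed.

Lemma sd_add (A B : {set T}) b : b \notin A -> b \notin B -> #|sd A (b |: B)| = (#|sd A B|).+1.
Proof.
move=> bA bB.
have -> : sd A (b |: B) = b |: sd A B.
  apply/setP => x; rewrite !inE; case: (eqVneq x b) => [->|]; first by rewrite (negbTE bA).
  by rewrite /=.
by rewrite cardsU1 !inE (negbTE bA) (negbTE bB).
Qed.

Lemma sd_same (A : {set T}) : sd A A = set0.
Proof. by rewrite /sd setDv setU0. Qed.

Lemma anc_step x u : e x u -> anc u = u |: anc x /\ u \notin anc x \/ anc x = x |: anc u /\ x \notin anc u.
Proof.
move=> exu; case: (edge_par exu) => E.
  have ur : u != r by apply: contraTneq exu => ur; rewrite E ur par_r eirr.
  by left; rewrite E anc_par // par_notin.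
have xr : x != r by apply: contraTneq exu => xr; rewrite E xr par_r eirr.
by right; rewrite E anc_par // par_notin.
Qed.

Lemma walk_sd x p : path e x p -> #|sd (anc x) (anc (last x p))| <= size p.
Proof.
elim: p x => [|u p IH] x /=; first by rewrite sd_same cards0.
case/andP=> exu pp; apply: (@leq_trans (#|sd (anc u) (anc (last u p))|).+1); last by rewrite ltnS IH.
case: (anc_step exu) => [[Eu un]|[Ex xn]].
  apply: (@sd_step _ _ _ u); rewrite Eu ?setUA ?setUid ?subsetUr //.
apply: (@sd_step _ _ _ x); rewrite Ex ?setUA ?setUid ?subsetUr //.
Qed.


Lemma dist_sd_le a b : dist a b <= #|sd (anc a) (anc b)|.
Proof.
have : h a + h b <= h a + h b by [].
move: {2}(h a + h b) => k; elim: k a b => [|k IH] a b hk.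
  have ha : h a = 0 by lia.
  have hb : h b = 0 by lia.
  by rewrite (h_eq0 ha) (h_eq0 hb) dist0.
have gen : forall a b, h a + h b <= k.+1 -> a \notin anc b ->
    dist a b <= #|sd (anc a) (anc b)|.
  move=> {}a {}b {}hk ab.
  have ar : a != r by apply: contraNneq ab => ->; exact: r_anc.
  have [ea hp] := par_spec ar.
  rewrite (anc_par ar) sdC sd_add ?par_notin // sdC.
  apply: leq_trans (dist_edge b ea) _; rewrite ltnS; apply: IH; lia.
case: (boolP (a \in anc b)) => ab; last exact: gen.
case: (boolP (b \in anc a)) => ba.
  by rewrite (anc_antisym ab ba) dist0.
by rewrite dist_sym sdC; apply: gen => //; lia.
Qed.

Lemma dist_sd a b : dist a b = #|sd (anc a) (anc b)|.
Proof.
apply/eqP; rewrite eqn_leq dist_sd_le /=.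
have /walk_lenP [p [sp pp pl]] := (dist_walk a b).2.
by rewrite -sp -pl; apply: walk_sd.
Qed.

Lemma h_card v : h v = #|anc v|.-1.
Proof.
rewrite /h dist_sd anc_r.
have -> : sd (anc v) [set r] = anc v :\ r.
  apply/setP => x; rewrite /sd !in_setU !in_setD !in_set1; case: (eqVneq x r) => [->|] /=.
    by rewrite r_anc.
  by rewrite andbF orbF.
by rewrite (cardsD1 r (anc v)) r_anc.
Qed.

Lemma dist_rv v : dist r v = #|anc v|.-1.
Proof. by rewrite dist_sym -h_card. Qed.


Lemma edge_sub x u c : e x u -> c \notin anc x -> c \in anc u -> u = c.
Proof.
move=> exu cx; case: (anc_step exu) => [[-> _]|[Ex _]].
  by rewrite in_setU1 (negbTE cx) orbF => /eqP.
by move=> cu; move: cx; rewrite Ex in_setU1 cu orbT.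
Qed.

Lemma enter x q c : path e x q -> c \notin anc x -> c \in anc (last x q) -> c \in q.
Proof.
elim: q x => [|u q IH] x /=; first by move=> _ /negbTE ->.
case/andP=> exu pq cx cl; case: (boolP (c \in anc u)) => cu.
  by rewrite (edge_sub exu cx cu) mem_head.
by rewrite inE (IH u pq cu cl) orbT.
Qed.

Lemma exit x q c : path e x q -> c \in anc x -> c \notin anc (last x q) -> c \in x :: q.
Proof.
elim: q x => [|u q IH] x /=; first by move=> _ ->.
case/andP=> exu pq cx cl; case: (boolP (c \in anc u)) => cu.
  by rewrite inE (IH u pq cu cl) orbT.
have eux : e u x by rewrite esym.
by rewrite (edge_sub eux cu cx) mem_head.
Qed.

Lemma on_path_anc a b v : on_path e a b v -> anc a :&: anc b \subset anc v.
Proof.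
case/existsP => k /existsP [p /and4P [pp /eqP pl up vp]].
apply/subsetP => c; rewrite in_setI => /andP[ca cb].
apply/negPn/negP => cv.
have va : v != a by apply: contraNneq cv => ->.
move: vp; rewrite inE (negbTE va) /= => vp.
move: pp pl up; case/splitPr: vp => p1 p2.
rewrite cat_path last_cat /= => /and3P [pp1 e1 pp2] pl up.
have c1 : c \in a :: p1.
  have := @exit a (rcons p1 v) c; rewrite rcons_path pp1 e1 last_rcons => /(_ isT ca cv).
  rewrite inE mem_rcons inE; case: (eqVneq c v) => [cv'|_]; last by rewrite /= inE.
  by move: cv; rewrite -cv' anc_self.
have c2 : c \in p2 by apply: (enter pp2) => //; rewrite pl.
move: up => /andP [ap]; rewrite cat_uniq => /and3P [_ H _].
move: c1; rewrite inE => /orP [/eqP ca'|c1].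
  by move: ap; rewrite mem_cat inE -ca' c2 !orbT.
by move/hasP: H; apply; exists c => //; rewrite inE c2 orbT.
Qed.

Lemma exists_low q x b : path e x q -> last x q = b ->
  exists2 w, w \in x :: q & anc w \subset anc x :&: anc b.
Proof.
elim: q x => [|u q IH] x /=.
  by move=> _ <-; exists x; rewrite ?mem_head ?setIid.
case/andP => exu pq lb.
case: (boolP (x \in anc b)) => xb.
  exists x; rewrite ?mem_head // subsetI subxx /=.
  by apply/subsetP => c cx; apply: anc_trans cx xb.
have [w wq sw] := IH u pq lb.
exists w; first by rewrite inE wq orbT.
rewrite subsetI; apply/andP; split; last by apply: subset_trans sw (subsetIr _ _).
apply/subsetP => c cw; move/subsetP: sw => /(_ c cw); rewrite in_setI => /andP [cu cb].
case: (anc_step exu) => [[Eu _]|[Ex _]].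
  move: cu; rewrite Eu in_setU1 => /orP [/eqP cu|//].
  by move: xb; rewrite (anc_trans _ (_ : u \in anc b)) // ?Eu ?in_setU1 ?anc_self ?orbT // -cu.
by rewrite Ex in_setU1 cu orbT.
Qed.

Lemma dtp_eq a b : dist_to_path e r a b = #|anc a :&: anc b|.-1.
Proof.
have [p [pp pl up]] := upath a b.
have sN := upath_size up.
have [w wq sw] := exists_low pp pl.
have onw : on_path e a b w.
  apply/existsP; exists (Ordinal sN); apply/existsP; exists (in_tuple p).
  by apply/and4P; split; [exact: pp | rewrite -pl | exact: up | exact: wq].
apply/eqP; rewrite eqn_leq; apply/andP; split.
  apply: leq_trans (@bigminn_le _ _ (fun v => dist r v) _ _ onw) _; rewrite dist_rv.
  have := subset_leq_card sw; lia.
apply: bigminn_ge.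
  have := max_card (anc a :&: anc b); lia.
move=> v /on_path_anc sv; rewrite dist_rv; have := subset_leq_card sv; lia.
Qed.


Lemma cardI_pos a b : 0 < #|anc a :&: anc b|.
Proof. by apply/card_gt0P; exists r; rewrite in_setI !r_anc. Qed.

Lemma pair_id a b : 2 * dist_to_path e r a b + dist a b = h a + h b.
Proof.
rewrite dtp_eq dist_sd !h_card /sd.
have D : (anc a :\: anc b) :&: (anc b :\: anc a) = set0.
  by apply/setP => x; rewrite !inE; case: (x \in anc a); case: (x \in anc b).
rewrite cardsU D cards0 subn0.
have := cardsID (anc b) (anc a); have := cardsID (anc a) (anc b).
have := cardI_pos a b; rewrite setIC => P Q1 Q2.
have : #|anc a| > 0 by apply/card_gt0P; exists a; exact: anc_self.
have : #|anc b| > 0 by apply/card_gt0P; exists b; exact: anc_self.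
lia.
Qed.

Definition SA a b := [set c | [&& c \in anc a, c \in anc b, c != a & c != b]].

Lemma SA_card a b : a != b -> #|SA a b| =
  if (a \in anc b) || (b \in anc a) then #|anc a :&: anc b|.-1 else #|anc a :&: anc b|.
Proof.
move=> ab; case: (boolP (a \in anc b)) => [Hab|Hab] /=.
  have -> : SA a b = (anc a :&: anc b) :\ a.
    apply/setP => c; rewrite !inE; case: (eqVneq c a) => [->|ca] /=; first by rewrite !andbF.
    case: (eqVneq c b) => [->|cb] /=; last by rewrite !andbT.
    rewrite !andbF anc_self andbT; symmetry; apply/negbTE/negP => ba; move: ab; by rewrite (anc_antisym Hab ba) eqxx.
  by rewrite (cardsD1 a (anc a :&: anc b)) in_setI anc_self Hab.
case: (boolP (b \in anc a)) => [Hba|Hba].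
  have -> : SA a b = (anc a :&: anc b) :\ b.
    apply/setP => c; rewrite !inE; case: (eqVneq c b) => [->|cb] /=; first by rewrite !andbF.
    case: (eqVneq c a) => [->|ca] /=; last by rewrite !andbT.
    by rewrite (negbTE Hab) andbF.
  by rewrite (cardsD1 b (anc a :&: anc b)) in_setI anc_self Hba.
suff -> : SA a b = anc a :&: anc b by [].
apply/setP => c; rewrite !inE.
case: (eqVneq c a) => [->|ca] /=; first by rewrite (negbTE Hab) !andbF.
case: (eqVneq c b) => [->|cb] /=; first by rewrite (negbTE Hba).
by rewrite !andbT.
Qed.

Lemma card_le1_eq (S : {set T}) x y : x \in S -> y \in S -> #|S| <= 1 -> x = y.
Proof.
move=> xS yS; apply: contraTeq => xy; rewrite -ltnNge.
have : [set x; y] \subset S by apply/subsetP => z; rewrite !inE => /orP [] /eqP ->.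
by move/subset_leq_card; rewrite cards2 xy.
Qed.

Lemma star_iff : (forall a b, a != b -> #|anc a :&: anc b| <= 1) <-> is_star_centre e r.
Proof.
split => [H|st].
  have key : forall x y, e x y -> anc y = y |: anc x -> y \notin anc x -> x = r /\ y != r.
    move=> x y exy Ey ny.
    have xy : x != y by apply: contraTneq exy => ->; rewrite eirr.
    have := H x y xy; rewrite Ey setIUr setIid => Hc.
    have Hc' : #|anc x| <= 1.
      by apply: leq_trans Hc; apply: subset_leq_card; rewrite subsetUr.
    split; first by apply: (card_le1_eq (anc_self x) (r_anc x) Hc').
    by apply: contraNneq ny => ->; exact: r_anc.
  have key2 : forall y, y != r -> e r y.
    move=> y yr; have [ey hp] := par_spec yr.
    have yp : y != par y by apply: contraTneq ey => <-; rewrite eirr.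
    have := H _ _ yp; rewrite {1}(anc_par yr) setIUl setIid => Hc.
    have Hc' : #|anc (par y)| <= 1.
      by apply: leq_trans Hc; apply: subset_leq_card; rewrite subsetUr.
    have -> : r = par y by apply: (card_le1_eq (r_anc _) (anc_self _) Hc').
    by rewrite esym.
  move=> x y; apply/idP/idP => [exy|].
    case: (anc_step exy) => [[Ey ny]|[Ex nx]].
      by have [-> yr] := key x y exy Ey ny; rewrite eqxx eq_sym (negbTE yr).
    have eyx : e y x by rewrite esym.
    by have [-> xr] := key y x eyx Ex nx; rewrite eqxx (negbTE xr).
  case: (eqVneq x r) => [->|xr]; case: (eqVneq y r) => [->|yr] //= _.
    exact: key2.
  by rewrite esym; apply: key2.
have parr : forall v, v != r -> par v = r.
  move=> v vr; have [ev _] := par_spec vr; move: ev; rewrite st (negbTE vr) /=.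
  by case: (par v =P r).
have sub2 : forall v, anc v \subset [set v; r].
  move=> v; case: (eqVneq v r) => [->|vr]; first by rewrite anc_r subsetUr.
  by rewrite (anc_par vr) parr // anc_r subxx.
move=> a b ab.
have : anc a :&: anc b \subset [set r].
  apply/subsetP => c; rewrite in_setI => /andP [/(subsetP (sub2 a)) ca /(subsetP (sub2 b)) cb].
  move: ca cb; rewrite !inE; case: (eqVneq c r) => //= _; rewrite !orbF => /eqP ca /eqP cb.
  by move: ab; rewrite -ca -cb eqxx.
by move/subset_leq_card; rewrite cards1.
Qed.


Lemma comp_of_inj : injective h -> forall a b, a \in anc b \/ b \in anc a.
Proof.
move=> hi a b; wlog hab : a b / h a <= h b.
  by move=> W; case: (leqP (h a) (h b)) => [/W //|/ltnW /W []]; [right|left].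
left; apply/ancP; exists (h b - h a); apply: hi; rewrite h_iter; lia.
Qed.

Lemma inj_of_comp : (forall a b, a != b -> a \in anc b \/ b \in anc a) -> injective h.
Proof.
move=> H a b E; apply/eqP; apply/negPn/negP => ab.
by case: (H a b ab) => X; [have := h_anc_eq X E | have := h_anc_eq X (Logic.eq_sym E)];
  move=> Q; move: ab; rewrite Q eqxx.
Qed.

Lemma path_inj : is_path_with_end e r -> injective h.
Proof.
case=> s [ps hs es].
have us : uniq s by rewrite (perm_uniq ps) enum_uniq.
have ins : forall v, v \in s by move=> v; rewrite (perm_mem ps) mem_enum.
have ir : index r s = 0.
  by move: (ins r) hs; case: s {ps us es ins} => [//|z s0] _ /= ->; rewrite eqxx.
have edge_idx : forall x y, e x y -> index x s <= (index y s).+1.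
  move=> x y /es [i [Hi [[<- <-]|[<- <-]]]]; rewrite !index_uniq ?(ltnW Hi) //; lia.
have walk_idx : forall p x, path e x p -> index x s <= size p + index (last x p) s.
  elim => [|u p IH] x /=; first by [].
  case/andP => exu pp; have := edge_idx _ _ exu; have := IH _ pp; lia.
have ge : forall v, index v s <= h v.
  move=> v; have /walk_lenP [p [sp pp pl]] := (dist_walk v r).2.
  have := walk_idx _ _ pp; rewrite pl ir /h -sp; lia.
have le : forall i, i < size s -> h (nth r s i) <= i.
  elim => [|i IH] Hi; first by rewrite nth0 hs hr.
  have ee : e (nth r s i.+1) (nth r s i).
    by rewrite esym; apply/es; exists i; split => //; left.
  have := dist_edge r ee; have := IH (ltnW Hi); rewrite /h; lia.
have hidx : forall v, h v = index v s.
  move=> v; have iv : index v s < size s by rewrite index_mem ins.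
  have := le _ iv; rewrite nth_index ?ins //; have := ge v; lia.
move=> a b E; rewrite !hidx in E.
by rewrite -(nth_index r (ins a)) E nth_index.
Qed.

Lemma inj_path : injective h -> is_path_with_end e r.
Proof.
move=> hi.
pose hh v : 'I_N := Ordinal (dist_lt v r).
have hhi : injective hh by move=> a b /(congr1 val) /= /hi.
have [g hg gh] : bijective hh by apply: inj_card_bij hhi _; rewrite card_ord.
pose s := map g (enum 'I_N).
have ss : size s = N by rewrite size_map size_enum_ord.
have nths : forall i (Hi : i < N), nth r s i = g (Ordinal Hi).
  move=> i Hi; rewrite (nth_map (Ordinal Hi)) ?size_enum_ord //; congr g.
  by apply: val_inj; rewrite /= nth_enum_ord.
have gv : forall v i (Hi : i < N), h v = i -> g (Ordinal Hi) = v.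
  move=> v i Hi hv; rewrite -[v in RHS]hg; congr g; exact: val_inj.
have nthh : forall v, nth r s (h v) = v.
  by move=> v; rewrite (nths _ (dist_lt v r)) (gv v).
have hnth : forall i, i < N -> h (nth r s i) = i.
  move=> i Hi; rewrite nths; have := gh (Ordinal Hi); by move/(congr1 val).
exists s; split.
- apply: uniq_perm; first by rewrite map_inj_uniq ?enum_uniq //; exact: (can_inj gh).
    exact: enum_uniq.
  move=> x; rewrite mem_enum; apply/mapP; exists (hh x); by rewrite ?mem_enum ?hg.
- by rewrite -nth0 -hr nthh.
move=> x y; split.
  move=> exy; case: (edge_par exy) => E.
    have yr : y != r by apply: contraTneq exy => yr; rewrite E yr par_r eirr.
    have [_ hp] := par_spec yr.
    exists (h x); split; first by rewrite ss E hp; exact: dist_lt.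
    by left; rewrite nthh E hp nthh.
  have xr : x != r by apply: contraTneq exy => xr; rewrite E xr par_r eirr.
  have [_ hp] := par_spec xr.
  exists (h y); split; first by rewrite ss E hp; exact: dist_lt.
  by right; rewrite nthh E hp nthh.
case=> i [Hi H].
have HiN : i.+1 < N by rewrite -ss.
have hi1 := hnth _ (ltnW HiN); have hi2 := hnth _ HiN.
have key : forall a b, nth r s i = a -> nth r s i.+1 = b -> e a b.
  move=> a b Ea Eb; rewrite Ea in hi1; rewrite Eb in hi2.
  have br : b != r by apply/eqP => E; move: hi2; rewrite E hr.
  have [eb hp] := par_spec br.
  have -> : a = par b by apply: hi; lia.
  by rewrite esym.
case: H => [[Ea Eb]|[Ea Eb]]; first exact: key.
by rewrite esym; apply: key.
Qed.


Definition Cen c a b : bool := [&& c \in anc a, c \in anc b, c != a, c != b & a != b].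

Lemma cen_gen x y z : x != y -> x != z -> y != z ->
  [/\ (x \in anc y) && (y \in anc x) = false, (x \in anc z) && (z \in anc x) = false,
      (y \in anc z) && (z \in anc y) = false,
      (x \in anc y) && (y \in anc z) ==> (x \in anc z) &
      (y \in anc x) && (x \in anc z) ==> (y \in anc z)].
Proof.
move=> xy xz yz; split.
- by apply/negbTE/negP => /andP[p q]; move: xy; rewrite (anc_antisym p q) eqxx.
- by apply/negbTE/negP => /andP[p q]; move: xz; rewrite (anc_antisym p q) eqxx.
- by apply/negbTE/negP => /andP[p q]; move: yz; rewrite (anc_antisym p q) eqxx.
- by apply/implyP => /andP[p q]; apply: anc_trans p q.
- by apply/implyP => /andP[p q]; apply: anc_trans p q.
Qed.

Lemma cen_le x y z : Cen x y z + Cen y x z + Cen z x y <= [&& x != y, x != z & y != z].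
Proof.
rewrite /Cen; case: (eqVneq x y) => [<-|xy]; first by rewrite ?eqxx /= ?andbF.
case: (eqVneq x z) => [<-|xz]; first by rewrite ?eqxx /= ?andbF.
case: (eqVneq y z) => [<-|yz]; first by rewrite ?eqxx /= ?andbF.
rewrite /= !andbT.
case: (cen_gen xy xz yz) => n1 n2 n3 _ _.
move: n1 n2 n3; case: (x \in anc y); case: (y \in anc x); case: (x \in anc z);
  case: (z \in anc x); case: (y \in anc z); case: (z \in anc y) => //=.
Qed.

Lemma cen_eq x y z : (forall a b, a \in anc b \/ b \in anc a) ->
  Cen x y z + Cen y x z + Cen z x y = [&& x != y, x != z & y != z].
Proof.
move=> C; rewrite /Cen; case: (eqVneq x y) => [<-|xy]; first by rewrite ?eqxx /= ?andbF.
case: (eqVneq x z) => [<-|xz]; first by rewrite ?eqxx /= ?andbF.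
case: (eqVneq y z) => [<-|yz]; first by rewrite ?eqxx /= ?andbF.
rewrite /= !andbT.
case: (cen_gen xy xz yz) => n1 n2 n3 t1 t2.
have c1 : (x \in anc y) || (y \in anc x) by case: (C x y) => ->; rewrite ?orbT.
have c2 : (x \in anc z) || (z \in anc x) by case: (C x z) => ->; rewrite ?orbT.
have c3 : (y \in anc z) || (z \in anc y) by case: (C y z) => ->; rewrite ?orbT.
move: n1 n2 n3 t1 t2 c1 c2 c3; case: (x \in anc y); case: (y \in anc x); case: (x \in anc z);
  case: (z \in anc x); case: (y \in anc z); case: (z \in anc y) => //=.
Qed.

End Tree.

Lemma sum_bool (I : finType) (P : pred I) : \sum_i (P i : nat) = #|[set i | P i]|.
Proof.
rewrite -sum1_card [RHS]big_mkcond /=; apply: eq_bigr => i _; rewrite inE; by case: (P i).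
Qed.

Lemma sym_sum n (g : 'I_n -> 'I_n -> nat) : (forall a b, g a b = g b a) ->
  \sum_(a : 'I_n) \sum_(b : 'I_n) g a b =
  \sum_(a : 'I_n) g a a + 2 * \sum_(a : 'I_n) \sum_(b : 'I_n | (a < b)%N) g a b.
Proof.
move=> gs.
have E : forall a : 'I_n, \sum_(b : 'I_n) g a b =
    g a a + \sum_(b : 'I_n | (a < b)%N) g a b + \sum_(b : 'I_n | (b < a)%N) g a b.
  move=> a; rewrite (bigD1 a) //= (bigID (fun b : 'I_n => (a < b)%N)) /= addnA.
  congr (_ + _ + _); apply: eq_bigl => b; rewrite -val_eqE /=; by case: ltngtP.
under eq_bigr => a _ do rewrite E.
rewrite !big_split /=.
suff -> : \sum_(a : 'I_n) \sum_(b : 'I_n | (b < a)%N) g a b =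
  \sum_(a : 'I_n) \sum_(b : 'I_n | (a < b)%N) g a b.
  by rewrite mul2n -addnn addnA.
rewrite (eq_bigr (fun a : 'I_n => \sum_(b : 'I_n) (if (b < a)%N then g a b else 0))); last first.
  by move=> a _; rewrite big_mkcond.
rewrite exchange_big /=; apply: eq_bigr => a _; rewrite [RHS]big_mkcond /=.
by apply: eq_bigr => b _; rewrite gs.
Qed.

Lemma sum_Dtriple (T : finType) :
  \sum_(x : T) \sum_(y : T) \sum_(z : T) ([&& x != y, x != z & y != z] : nat)
  = #|T| * (#|T| - 1) * (#|T| - 2).
Proof.
have E1 : forall x y : T, \sum_(z : T) ([&& x != y, x != z & y != z] : nat) = (x != y) * (#|T| - 2).
  move=> x y; case: (eqVneq x y) => [<-|xy] /=.
    by rewrite mul0n big1 // => z _; rewrite andbF.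
  rewrite mul1n sum_bool.
  have -> : [set z | (x != z) && (y != z)] = ~: [set x; y].
    by apply/setP => z; rewrite !inE negb_or ![z == _]eq_sym.
  have := cardsC [set x; y]; rewrite cards2 xy /=; lia.
have E2 : forall x : T, \sum_(y : T) (x != y) * (#|T| - 2) = (#|T| - 1) * (#|T| - 2).
  move=> x; rewrite -big_distrl /= sum_bool.
  have -> : [set y | x != y] = [set~ x] by apply/setP => y; rewrite !inE eq_sym.
  by rewrite cardsC1 subn1.
under eq_bigr => x _ do under eq_bigr => y _ do rewrite E1.
under eq_bigr => x _ do rewrite E2.
rewrite sum_nat_const.
by rewrite mulnA.
Qed.

Lemma sum3_split (T : finType) (F : T -> T -> T -> nat) :
  \sum_(x : T) \sum_(y : T) \sum_(z : T) (F x y z + F y x z + F z x y) =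
  3 * \sum_(x : T) \sum_(y : T) \sum_(z : T) F x y z.
Proof.
have E2 : \sum_(x : T) \sum_(y : T) \sum_(z : T) F y x z = \sum_(x : T) \sum_(y : T) \sum_(z : T) F x y z.
  by rewrite exchange_big.
have E3 : \sum_(x : T) \sum_(y : T) \sum_(z : T) F z x y = \sum_(x : T) \sum_(y : T) \sum_(z : T) F x y z.
  rewrite (eq_bigr (fun x => \sum_(z : T) \sum_(y : T) F z x y)); last by move=> x _; rewrite exchange_big.
  by rewrite exchange_big.
rewrite (eq_bigr (fun x => \sum_(y : T) \sum_(z : T) F x y z + \sum_(y : T) \sum_(z : T) F y x z
   + \sum_(y : T) \sum_(z : T) F z x y)); last first.
  move=> x _; rewrite -!big_split /=; apply: eq_bigr => y _; by rewrite -!big_split.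
by rewrite !big_split /= E2 E3 mulSn mul2n -addnn addnA.
Qed.

Import Order.TTheory GRing.Theory Num.Theory.
Local Open Scope ring_scope.

Theorem proposition2p8 (n : nat) (hn : (0 < n)%N) (e : rel 'I_n)
  (esym : symmetric e) (eirr : irreflexive e) (etree : is_tree e) :
  let r : 'I_n := Ordinal hn in
  [/\ Rval e r = 4%:Z * (\sum_(a : 'I_n) \sum_(b : 'I_n | (a < b)%N)
                            dist_to_path e r a b)%N%:Z,
      0 <= Rval e r,
      3%:Z * Rval e r <= (2 * n * (n - 1) * (n - 2))%N%:Z,
      (3%:Z * Rval e r = (2 * n * (n - 1) * (n - 2))%N%:Z <-> is_path_with_end e r)
    & (Rval e r = 0 <-> is_star_centre e r)].
Proof.
move=> r.
pose d := Defs.dist e.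
pose dtp := dist_to_path e r.
pose S := (\sum_(u : 'I_n) d u r)%N.
pose W := (\sum_(u : 'I_n) \sum_(v : 'I_n) d u v)%N.
pose Tt := (\sum_(a : 'I_n) \sum_(b : 'I_n | (a < b)%N) dtp a b)%N.
have cn : #|'I_n| = n := card_ord n.
have dtpE : forall a b, dtp a b = #|anc e r a :&: anc e r b|.-1.
  by move=> a b; apply: dtp_eq.
have dsym : forall a b, dtp a b = dtp b a by move=> a b; rewrite !dtpE setIC.
have ddiag : forall a, dtp a a = d a r.
  by move=> a; rewrite dtpE setIid -(h_card esym eirr etree).
have pid : forall a b, (2 * dtp a b + d a b = d a r + d b r)%N.
  by move=> a b; apply: pair_id.
have key : (4 * Tt + W = 2 * (n - 1) * S)%N.
  have E1 : (\sum_(a : 'I_n) \sum_(b : 'I_n) (2 * dtp a b + d a b)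
           = \sum_(a : 'I_n) \sum_(b : 'I_n) (d a r + d b r))%N.
    by apply: eq_bigr => a _; apply: eq_bigr => b _; apply: pid.
  have L : (\sum_(a : 'I_n) \sum_(b : 'I_n) (2 * dtp a b + d a b)
           = 2 * (S + 2 * Tt) + W)%N.
    under eq_bigr => a _ do rewrite big_split /= -big_distrr /=.
    rewrite big_split /= -big_distrr /= sym_sum //.
    by rewrite (eq_bigr (fun a => d a r)) // => a _; rewrite ddiag.
  have R : (\sum_(a : 'I_n) \sum_(b : 'I_n) (d a r + d b r) = n * S + n * S)%N.
    under eq_bigr => a _ do rewrite big_split /= sum_nat_const cn.
    by rewrite big_split /= -big_distrr /= sum_nat_const cn.
  rewrite L R in E1.
  have : (n * S = S + (n - 1) * S)%N by rewrite -{1}(subnK hn) addnC mulnDl mul1n.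
  nia.
have Rv : Rval e r = (4 * Tt)%N%:Z.
  rewrite /Rval -PoszM.
  change (((2 * (n - 1) * S)%N%:Z - W%:Z)%R = (4 * Tt)%N%:Z).
  by rewrite -key PoszD addrK.
pose SA' := SA e r.
pose U := (\sum_(a : 'I_n) \sum_(b : 'I_n | (a < b)%N) #|SA' a b|)%N.
pose C := (\sum_(c : 'I_n) \sum_(a : 'I_n) \sum_(b : 'I_n) (Cen e r c a b : nat))%N.
have ltne : forall a b : 'I_n, (a < b)%N -> a != b.
  by move=> a b ab; apply: contraTneq ab => ->; rewrite ltnn.
have TU : (Tt <= U)%N.
  apply: leq_sum => a _; apply: leq_sum => b ab.
  rewrite dtpE /SA' (SA_card etree r (ltne _ _ ab)); case: ifP => _ //; exact: leq_pred.
have UC : (2 * U = C)%N.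
  have gs : forall a b : 'I_n, ((a != b) * #|SA' a b| = (b != a) * #|SA' b a|)%N.
    move=> a b; rewrite eq_sym; congr (_ * _); apply: eq_card => c; rewrite !inE.
    by case: (c \in anc e r a); case: (c \in anc e r b); case: (c != a); case: (c != b).
  have D0 : (\sum_(a < n) (a != a) * #|SA' a a| = 0)%N by rewrite big1 // => a _; rewrite eqxx.
  have := sym_sum gs; rewrite D0 add0n.
  have U' : (\sum_(a < n) \sum_(b < n | (a < b)%N) (a != b) * #|SA' a b| = U)%N.
    by apply: eq_bigr => a _; apply: eq_bigr => b ab; rewrite ltne // mul1n.
  have C' : C = (\sum_(a < n) \sum_(b < n) \sum_(c < n) (Cen e r c a b : nat))%N.
    rewrite /C exchange_big /=; apply: eq_bigr => a _; by rewrite exchange_big.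
  rewrite U' C' => <-; apply: eq_bigr => a _; apply: eq_bigr => b _.
  rewrite sum_bool; case: (eqVneq a b) => [<-|ab] /=.
    rewrite mul0n; symmetry; apply/eqP; rewrite cards_eq0; apply/eqP/setP => c.
    by rewrite !inE /Cen eqxx !andbF.
  rewrite mul1n; apply: eq_card => c; rewrite !inE /Cen.
  by rewrite ab !andbT.
have CD : (3 * C <= n * (n - 1) * (n - 2))%N.
  have E := sum3_split (fun c a b : 'I_n => (Cen e r c a b : nat)).
  have D := sum_Dtriple 'I_n; rewrite cn in D.
  rewrite /C -E -D /=.
  by apply: leq_sum => x _; apply: leq_sum => y _; apply: leq_sum => z _; apply: cen_le.
pose P := (n * (n - 1) * (n - 2))%N.
have P2 : (2 * n * (n - 1) * (n - 2) = 2 * P)%N by rewrite /P !mulnA.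
have E := sum3_split (fun c a b : 'I_n => (Cen e r c a b : nat)).
have D := sum_Dtriple 'I_n; rewrite cn in D.
have cmp_of_dtp : forall a b : 'I_n, (a < b)%N -> dtp a b = #|SA' a b| ->
    a \in anc e r b \/ b \in anc e r a.
  move=> a b ab; rewrite dtpE /SA' (SA_card etree r (ltne _ _ ab)).
  case: ifP => [/orP [] H _|_ Hc]; [by left|by right|].
  have := cardI_pos etree r a b; lia.
split.
- by rewrite Rv PoszM.
- by rewrite Rv.
- rewrite Rv -PoszM lez_nat P2; lia.
- split.
  + rewrite Rv -PoszM P2 => /eqP; rewrite eqz_nat => /eqP H.
    have TU' : Tt = U by lia.
    have Z : (\sum_(a < n) \sum_(b < n | (a < b)%N) (#|SA' a b| - dtp a b) = 0)%N.
      rewrite (eq_bigr (fun a : 'I_n => \sum_(b < n | (a < b)%N) #|SA' a b| -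
                                       \sum_(b < n | (a < b)%N) dtp a b)%N); last first.
        move=> a _; rewrite sumnB // => b ab.
        rewrite dtpE /SA' (SA_card etree r (ltne _ _ ab)); case: ifP => _ //; exact: leq_pred.
      rewrite sumnB; first by rewrite -/U -/Tt TU' subnn.
      move=> a _; apply: leq_sum => b ab.
      rewrite dtpE /SA' (SA_card etree r (ltne _ _ ab)); case: ifP => _ //; exact: leq_pred.
    have Zab : forall a b : 'I_n, (a < b)%N -> dtp a b = #|SA' a b|.
      move=> a b ab; move/eqP: Z; rewrite sum_nat_eq0 => /forallP /(_ a) /=.
      rewrite sum_nat_eq0 => /forallP /(_ b); rewrite ab /= subn_eq0 => Hle.
      apply/eqP; rewrite eqn_leq Hle andbT.
      rewrite dtpE /SA' (SA_card etree r (ltne _ _ ab)); case: ifP => _ //; exact: leq_pred.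
    apply: (inj_path esym eirr etree); apply: (inj_of_comp etree) => a b ab.
    case: (ltngtP a b) => [lab|lba|eab].
    * exact: cmp_of_dtp (Zab _ _ lab).
    * by case: (cmp_of_dtp _ _ lba (Zab _ _ lba)); [right|left].
    * by case/eqP: ab; apply: val_inj.
  + move=> Pth; have hi := path_inj esym etree Pth.
    have comp := comp_of_inj etree hi.
    have TU' : Tt = U.
      apply: eq_bigr => a _; apply: eq_bigr => b ab.
      rewrite dtpE /SA' (SA_card etree r (ltne _ _ ab)).
      by case: (comp a b) => ->; rewrite ?orbT.
    have CP : (3 * C = P)%N.
      rewrite /C -E /P -D; apply: eq_bigr => x _; apply: eq_bigr => y _; apply: eq_bigr => z _.
      exact: cen_eq.
    rewrite Rv -PoszM P2; congr Posz; lia.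
- split.
  + rewrite Rv => /eqP; rewrite eqz_nat muln_eq0 /= => /eqP T0.
    apply/(star_iff esym eirr etree r) => a b ab.
    have Z : forall a b : 'I_n, (a < b)%N -> dtp a b = 0%N.
      move=> a' b' lab; move/eqP: T0; rewrite sum_nat_eq0 => /forallP /(_ a') /=.
      by rewrite sum_nat_eq0 => /forallP /(_ b'); rewrite lab /= => /eqP.
    case: (ltngtP a b) => [lab|lba|eab].
    * by have := Z _ _ lab; rewrite dtpE; lia.
    * by have := Z _ _ lba; rewrite dtpE setIC; lia.
    * by case/eqP: ab; apply: val_inj.
  + move=> st; have H := (star_iff esym eirr etree r).2 st.
    rewrite Rv /Tt big1 ?muln0 // => a _; rewrite big1 // => b ab.
    by rewrite dtpE; have := H a b (ltne _ _ ab); lia.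
Qed.
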